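(* Let $s\ge1$ and $n\ge1$ be integers, $\Sigma=\{-s,\dots,-1,0,1,\dots,s\}$ and $\Sigma_*=\Sigma\setminus\{0\}$. Every string ${\bf t}\in\Sigma^n$ is equivalent to one and only one string of the form $x_1x_2\cdots x_k\underbrace{0\cdots0}_{n-k}$ with $0\le k\le n$, $x_i\in\Sigma_*$ for all $i$, and such that there is no index $i$ with $x_i=m\in\{1,\dots,s\}$ and $x_{i+1}=-m$.
   Context: The local moves on strings in $\Sigma^n$ are: replace an adjacent pair $(0,m)$ by $(m,0)$ or vice versa, for any $m\in\Sigma_*$; and replace an adjacent pair $(0,0)$ by $(m,-m)$ or vice versa, for any $m\in\{1,\dots,s\}$. Two strings are equivalent if one can be obtained from the other by a finite sequence of local moves. *)

(* Defs.v *)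
From mathcomp Require Import all_boot all_order all_algebra.
From Stdlib Require Import Relations.
Set Implicit Arguments. Unset Strict Implicit. Unset Printing Implicit Defensive.
Import Order.TTheory GRing.Theory Num.Theory.
Local Open Scope ring_scope.

Definition in_Sigma (s : nat) (x : int) : bool := (- (s%:Z) <= x) && (x <= s%:Z).
Definition in_Sigma_star (s : nat) (x : int) : bool := in_Sigma s x && (x != 0).
Definition in_pos (s : nat) (m : int) : bool := (0 < m) && (m <= s%:Z).

Definition is_string (s n : nat) (t : seq int) : Prop :=
  size t = n /\ all (in_Sigma s) t.

Definition pair_move (s : nat) (x y x' y' : int) : Prop :=
  (exists m, in_Sigma_star s m /\ x = 0 /\ y = m /\ x' = m /\ y' = 0) \/
  (exists m, in_Sigma_star s m /\ x = m /\ y = 0 /\ x' = 0 /\ y' = m) \/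
  (exists m, in_pos s m /\ x = 0 /\ y = 0 /\ x' = m /\ y' = - m) \/
  (exists m, in_pos s m /\ x = m /\ y = - m /\ x' = 0 /\ y' = 0).

Definition local_move (s : nat) (u v : seq int) : Prop :=
  exists (a b : seq int) (x y x' y' : int),
    u = a ++ [:: x; y] ++ b /\ v = a ++ [:: x'; y'] ++ b /\ pair_move s x y x' y'.

Definition equiv_str (s : nat) : relation (seq int) :=
  clos_refl_trans (seq int) (local_move s).

Definition normal_form (s n : nat) (u : seq int) : Prop :=
  exists (k : nat) (xs : seq int),
    (k <= n)%N /\ size xs = k /\ u = xs ++ nseq (n - k)%N (0 : int) /\
    all (in_Sigma_star s) xs /\
    (forall i : nat, (i.+1 < k)%N ->
        ~ (in_pos s (nth 0 xs i) /\ nth 0 xs i.+1 = - nth 0 xs i)).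

(* Main.v *)
Require Import Defs.
From mathcomp Require Import all_boot all_order all_algebra.
From Stdlib Require Import Relations.
Set Implicit Arguments. Unset Strict Implicit. Unset Printing Implicit Defensive.
Import Order.TTheory GRing.Theory Num.Theory.
Local Open Scope ring_scope.

Definition push (x : int) (r : seq int) : seq int :=
  if x == 0 then r else
  if r is y :: r' then (if (0 < x) && (y == - x) then r' else x :: r) else [:: x].

Definition red (t : seq int) := foldr push [::] t.

Definition erel (x y : int) : bool := ~~ ((0 < x) && (y == - x)).

Lemma red_cat a b : red (a ++ b) = foldr push (red b) a.
Proof. by rewrite /red foldr_cat. Qed.

Lemma push_pair s x y x' y' : pair_move s x y x' y' ->
  forall r, push x (push y r) = push x' (push y' r).
Proof.
move=> [[m [_ [-> [-> [-> ->]]]]]|[[m [_ [-> [-> [-> ->]]]]]|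
        [[m [/andP[m0 _] [-> [-> [-> ->]]]]]|[m [/andP[m0 _] [-> [-> [-> ->]]]]]]]] r.
- by rewrite /push eqxx.
- by rewrite /push eqxx.
- have hm : (- m == 0) = false by rewrite oppr_eq0 gt_eqF.
  have hm' : (m == 0) = false by rewrite gt_eqF.
  have hn : (0 < - m) = false by rewrite oppr_gt0 ltNge ltW.
  by rewrite /push eqxx hm hm'; case: r => [|w r] /=; rewrite ?hn ?m0 ?eqxx /= ?hn ?hm ?hm' ?m0 ?eqxx.
- have hm : (- m == 0) = false by rewrite oppr_eq0 gt_eqF.
  have hm' : (m == 0) = false by rewrite gt_eqF.
  have hn : (0 < - m) = false by rewrite oppr_gt0 ltNge ltW.
  by rewrite /push eqxx hm hm'; case: r => [|w r] /=; rewrite ?hn ?m0 ?eqxx /= ?hn ?hm ?hm' ?m0 ?eqxx.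
Qed.

Lemma move_red s u v : local_move s u v -> red u = red v.
Proof.
move=> [a [b [x [y [x' [y' [-> [-> hp]]]]]]]].
by rewrite !red_cat /= (push_pair hp).
Qed.

Lemma move_size s u v : local_move s u v -> size u = size v.
Proof. by move=> [a [b [x [y [x' [y' [-> [-> hp]]]]]]]]; rewrite !size_cat. Qed.

Lemma equiv_red s u v : equiv_str s u v -> red u = red v /\ size u = size v.
Proof.
elim=> [x y h|x|x y z _ [h1 h2] _ [h3 h4]].
- by split; [apply: move_red h| apply: move_size h].
- by [].
- by rewrite h1 h3 h2 h4.
Qed.

Lemma equiv_cons s y u v : equiv_str s u v -> equiv_str s (y :: u) (y :: v).
Proof.
elim=> [x z h|x|x z w _ h1 _ h2].
- apply: rt_step; move: h => [a [b [x1 [y1 [x' [y' [-> [-> hp]]]]]]]].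
  by exists (y :: a), b, x1, y1, x', y'.
- exact: rt_refl.
- exact: rt_trans h1 h2.
Qed.

Lemma zero_move s r w : all (in_Sigma_star s) r ->
  equiv_str s (0 :: r ++ w) (r ++ 0 :: w).
Proof.
elim: r => [|y r IH] /=; first by move=> _; apply: rt_refl.
move=> /andP[hy hr]; apply: rt_trans (equiv_cons y (IH hr)).
apply: rt_step; exists [::], (r ++ w), 0, y, y, 0; split; first by [].
split; first by [].
by left; exists y.
Qed.

Lemma red_star s t : all (in_Sigma s) t -> all (in_Sigma_star s) (red t).
Proof.
elim: t => [|x t IH] //= /andP[hx ht]; have := IH ht.
rewrite /push; case: (eqVneq x 0) => [//|x0].
case: (red t) => [|y r] /=.
- by rewrite /in_Sigma_star hx x0.
- case: ifP => _ /=; first by case/andP.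
  by rewrite /in_Sigma_star hx x0.
Qed.

Lemma red_sorted t : sorted erel (red t).
Proof.
elim: t => [|x t IH] //=; rewrite /push; case: (eqVneq x 0) => [//|x0].
move: IH; case: (red t) => [|y r] //= hp.
case: ifP => hc /=.
- by case: r hp => //= z r /andP[].
- by rewrite /erel hc hp.
Qed.

Lemma red_nseq j : red (nseq j 0) = [::].
Proof. by elim: j => //= j ->; rewrite /push eqxx. Qed.

Lemma red_id xs : all (fun x => x != 0) xs -> sorted erel xs -> red xs = xs.
Proof.
elim: xs => [|x xs IH] //= /andP[x0 hxs] hp.
rewrite IH //; last exact: path_sorted hp.
rewrite /push (negbTE x0); case: xs hp {IH hxs} => [|y r] //= /andP[].
by rewrite /erel => /negbTE ->.
Qed.

Lemma exists_nf s t : all (in_Sigma s) t ->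
  exists z, equiv_str s t (red t ++ nseq z 0).
Proof.
elim: t => [|x t IH] /=; first by move=> _; exists 0%N; apply: rt_refl.
move=> /andP[hx ht]; have [z hz] := IH ht.
have hst := red_star ht.
have step := equiv_cons x hz.
rewrite /push; case: (eqVneq x 0) => [x0|x0].
- exists z.+1; apply: rt_trans step _; rewrite x0.
  exact: zero_move.
- move: step hst; case: (red t) => [|y r] step hst.
  + by exists z.
  + case: ifP => hc.
    * exists z.+2; apply: rt_trans step _.
      case/andP: hc => xp /eqP ->.
      apply: rt_trans (_ : equiv_str s _ (0 :: 0 :: r ++ nseq z 0)) _.
        apply: rt_step; exists [::], (r ++ nseq z 0), x, (-x), 0, 0.
        split; first by []; split; first by [].
        right; right; right; exists x; split => //.
        by rewrite /in_pos xp; case/andP: hx.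
      move: hst => /= /andP[_ hr].
      apply: rt_trans (equiv_cons 0 (zero_move (nseq z 0) hr)) _.
      exact: (zero_move (0 :: nseq z 0) hr).
    * by exists z; apply: step.
Qed.

Theorem lemma5 (s n : nat) (hs : (1 <= s)%N) (hn : (1 <= n)%N) (t : seq int) :
  is_string s n t ->
  exists u : seq int,
    (normal_form s n u /\ equiv_str s t u) /\
    (forall v : seq int, normal_form s n v -> equiv_str s t v -> v = u).
Proof.
move=> [hsz hall].
have [z hz] := exists_nf hall.
have [_ hsz2] := equiv_red hz.
rewrite size_cat size_nseq hsz in hsz2.
have hk : (size (red t) <= n)%N by rewrite hsz2 leq_addr.
have hzn : z = (n - size (red t))%N by rewrite hsz2 addKn.
exists (red t ++ nseq (n - size (red t)) 0); split.
- split; last by rewrite -hzn.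
  exists (size (red t)), (red t); do 3 (split; first by []).
  split; first exact: red_star.
  move=> i hi [hp he].
  have := red_sorted t; move/(sortedP 0) => /(_ i hi).
  by rewrite /erel he eqxx; case/andP: hp => -> _.
- move=> v [k [xs [hkn [hxs [-> [hst hnr]]]]]] he.
  have [hr _] := equiv_red he.
  have hxs' : red xs = xs.
    apply: red_id.
      by apply/allP => x /(allP hst) /andP[].
    apply/(sortedP 0) => i hi; rewrite /erel; apply/negP => /andP[xp /eqP xe].
    apply: (hnr i); first by rewrite -hxs.
    split => //; rewrite /in_pos xp /=.
    have : nth 0 xs i \in xs by apply: mem_nth; apply: ltn_trans hi.
    by move/(allP hst) => /andP[/andP[_ ->]].
  rewrite red_cat red_nseq -/(red xs) hxs' in hr.
  by rewrite -hr -hxs hr.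
Qed.
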